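(* Let $K$ be a valued field and $d\ge1$. For any $d+2$ points $x_1,\dots,x_{d+2}\in K^d$ (not necessarily distinct), there is $i\in\{1,\dots,d+2\}$ such that $x_i\in\operatorname{conv}(\{x_j: j\ne i\})$.
   Context: $K$ is a field with a valuation $\nu:K\to\Gamma\cup\{\infty\}$ and valuation ring $\mathcal{O}=\{x:\nu(x)\ge 0\}$. For $Y\subseteq K^d$, $\operatorname{conv}(Y)=\{\sum_{i=1}^n\alpha_iy_i: n\ge1, y_i\in Y,\alpha_i\in\mathcal{O},\sum_i\alpha_i=1\}$ (the smallest convex set containing $Y$, where a set is convex if closed under all such combinations). *)

(* Defs.v *)
From HB Require Import structures.
From mathcomp Require Import all_boot all_order all_algebra.
Set Implicit Arguments. Unset Strict Implicit. Unset Printing Implicit Defensive.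
Import GRing.Theory.
Local Open Scope ring_scope.

(* The value set is
   Gamma ∪ {∞}, modelled as [option Gamma] with [None] = ∞. *)

Definition is_ordered_group (G : zmodType) (le : rel G) : Prop :=
  [/\ (forall a, le a a),
      (forall a b, le a b -> le b a -> a = b),
      (forall a b c, le a b -> le b c -> le a c),
      (forall a b, le a b \/ le b a)
    & (forall a b c, le a b -> le (a + c) (b + c))].

Definition vle (G : zmodType) (le : rel G) (a b : option G) : Prop :=
  match a, b with
  | _, None => True
  | None, Some _ => False
  | Some x, Some y => le x y
  end.

Definition vadd (G : zmodType) (a b : option G) : option G :=
  match a, b with
  | Some x, Some y => Some (x + y)
  | _, _ => None
  end.

Definition is_valuation (K : fieldType) (G : zmodType) (le : rel G)
    (nu : K -> option G) : Prop :=
  [/\ is_ordered_group le,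
      (forall x, nu x = None <-> x = 0),
      (forall x y, nu (x * y) = vadd (nu x) (nu y))
    & (forall x y, vle le (nu x) (nu (x + y)) \/ vle le (nu y) (nu (x + y)))].

Definition val_ring (K : fieldType) (G : zmodType) (le : rel G)
    (nu : K -> option G) (x : K) : Prop :=
  vle le (Some 0) (nu x).

Definition vconv (K : fieldType) (G : zmodType) (le : rel G)
    (nu : K -> option G) (d : nat) (Y : 'rV[K]_d -> Prop) (z : 'rV[K]_d) : Prop :=
  exists (n : nat) (a : 'I_n -> K) (y : 'I_n -> 'rV[K]_d),
    [/\ (0 < n)%N,
        (forall i, Y (y i)),
        (forall i, val_ring le nu (a i)),
        \sum_(i < n) a i = 1
      & z = \sum_(i < n) a i *: y i].

(* Main.v *)
Require Import Defs.
From HB Require Import structures.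
From mathcomp Require Import all_boot all_order all_algebra.
From mathcomp Require Import zify.
Local Open Scope ring_scope.
Import GRing.Theory.

Section Val.
Variables (K : fieldType) (G : zmodType) (le : rel G) (nu : K -> option G).
Hypothesis Hnu : is_valuation le nu.

Lemma nu1 : nu 1 = Some 0.
Proof.
case: Hnu => _ H0 HM _.
case E: (nu 1) => [t|]; last by move/H0: E => /eqP; rewrite oner_eq0.
have := HM 1 1; rewrite mulr1 E /= => [[]].
by move=> h; congr Some; apply: (addrI t); rewrite addr0.
Qed.

Lemma nuN1 : nu (-1) = Some 0.
Proof.
case: Hnu => [[r a t tot add] H0 HM _].
case E: (nu (-1)) => [s|]; last first.
  by move/H0: E => /eqP; rewrite oppr_eq0 oner_eq0.
have := HM (-1) (-1); rewrite mulrNN mulr1 nu1 E /= => [[ss]].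
congr Some.
case: (tot 0 s) => h.
- have h2 := add _ _ s h; rewrite add0r -ss in h2.
  by apply: a => //.
- have h2 := add _ _ s h; rewrite add0r -ss in h2.
  by apply: a => //.
Qed.

Lemma nuN y : nu (- y) = nu y.
Proof.
case: Hnu => _ _ HM _.
by rewrite -mulN1r HM nuN1 /=; case: (nu y) => //= g; rewrite add0r.
Qed.

Lemma vle_trans a b c : vle le a b -> vle le b c -> vle le a c.
Proof.
case: Hnu => [[r an t tot add] _ _ _].
by case: a; case: b; case: c => //= *; apply: t; eauto.
Qed.

Lemma vle_total a b : vle le a b \/ vle le b a.
Proof.
case: Hnu => [[r an t tot add] _ _ _].
by case: a; case: b => /=; auto.
Qed.

Lemma val_ring_div b c : c != 0 -> vle le (nu c) (nu b) -> val_ring le nu (b / c).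
Proof.
move=> c0 h.
case: Hnu => [[r an t tot add] H0 HM _].
rewrite /val_ring.
have e : b = (b / c) * c by rewrite divfK.
rewrite e HM in h.
case Ec: (nu c) h => [gc|]; last by move/H0: Ec => /eqP; rewrite (negbTE c0).
case: (nu (b / c)) => [g|] //= h.
have := add _ _ (- gc) h.
by rewrite addrK subrr.
Qed.

End Val.

Lemma argmin_seq (T : eqType) (R : T -> T -> Prop)
  (Rt : forall a b c, R a b -> R b c -> R a c)
  (Rtot : forall a b, R a b \/ R b a) (s : seq T) (x0 : T) :
  x0 \in s -> exists2 m, m \in s & forall y, y \in s -> R m y.
Proof.
case: s => // a s _.
elim: s a => [|b s IH] a.
  exists a; first by rewrite inE eqxx.
  move=> y; rewrite inE => /eqP ->.
  by case: (Rtot a a).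
have [m ms hm] := IH b.
case: (Rtot a m) => h.
- exists a; first by rewrite inE eqxx.
  move=> y; rewrite inE => /orP [/eqP -> | ys]; first by case: (Rtot a a).
  exact: Rt h (hm _ ys).
- exists m; first by rewrite inE ms orbT.
  by move=> y; rewrite inE => /orP [/eqP -> | ys] //; exact: hm.
Qed.

Theorem proposition2p7 (K : fieldType) (G : zmodType) (le : rel G)
    (nu : K -> option G) (Hnu : is_valuation le nu)
    (d : nat) (Hd : (1 <= d)%N) (x : 'I_d.+2 -> 'rV[K]_d) :
  exists i : 'I_d.+2,
    vconv le nu (fun y => exists2 j : 'I_d.+2, j != i & y = x j) (x i).
Proof.
pose X : 'M[K]_(d.+2, d) := \matrix_j x j.
pose M := row_mx X (const_mx 1 : 'M[K]_(d.+2, 1)).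
have : kermx M != 0.
  apply/eqP => h.
  have := mxrank_ker M; rewrite h mxrank0.
  have := rank_leq_col M. lia.
move=> /rowV0Pn [v /sub_kermxP hv v0].
have hv' : row_mx (v *m X) (v *m (const_mx 1 : 'M[K]_(d.+2, 1))) = 0 by rewrite -mul_mx_row.
have [hX hC] : v *m X = 0 /\ v *m (const_mx 1 : 'M[K]_(d.+2, 1)) = 0.
  by apply: (@eq_row_mx _ 1 d 1); rewrite hv' row_mx0.
have sumv : \sum_j v 0 j = 0.
  have := congr1 (fun A : 'M[K]_(1,1) => A 0 0) hC.
  rewrite !mxE /= => h; apply: etrans h; apply: eq_bigr => j _; rewrite mxE mulr1 //.
have sumx : \sum_j v 0 j *: x j = 0.
  apply: etrans _ hX; rewrite mulmx_sum_row; apply: eq_bigr => j _.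
  congr (_ *: _); apply/rowP => k; rewrite !mxE //.
have [i _ hi] := @argmin_seq _
   (fun a b : 'I_d.+2 => vle le (nu (v 0 a)) (nu (v 0 b)))
   (fun a b c => @vle_trans K G le nu Hnu _ _ _)
   (fun a b => @vle_total K G le nu Hnu _ _) (enum 'I_d.+2) ord0 (mem_enum _ ord0).
have vi0 : v 0 i != 0.
  apply/eqP => e.
  case/eqP: v0; apply/rowP => j; rewrite mxE.
  have := hi j (mem_enum _ j); rewrite e.
  case: Hnu => _ H0 _ _.
  have -> : nu 0 = None by apply/H0.
  by case E: (nu (v 0 j)) => //= _; apply/H0.
exists i.
exists d.+1, (fun k => - v 0 (lift i k) / v 0 i), (fun k => x (lift i k)).
split => //.
- by move=> k; exists (lift i k) => //; rewrite eq_sym neq_lift.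
- move=> k.
  apply: (@val_ring_div K G le nu Hnu) => //.
  by rewrite (@nuN K G le nu Hnu); apply: hi; apply: mem_enum.
- rewrite -mulr_suml sumrN.
  move: sumv; rewrite (bigD1_ord i) //= => /eqP; rewrite addrC addr_eq0 => /eqP ->.
  by rewrite opprK divff.
- move: sumx; rewrite (bigD1_ord i) //= => /eqP; rewrite addrC addr_eq0 => /eqP e.
  apply: (scalerI vi0); rewrite -[LHS]opprK -e scaler_sumr -sumrN; apply: eq_bigr => k _.
  by rewrite scalerA mulrC divfK // scaleNr.
Qed.
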